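(* Let $N$ be a positive integer, $a,b,c\in\mathbb{R}$ with $a\neq0$, $W=[w_{ij}]\in\mathbb{R}^{N\times N}$ with $w_{ii}=0$ for all $i$, $\Delta=\mathrm{diag}(\delta_1,\dots,\delta_N)$ with $\delta_i\in\{0,1\}$, and $h>0$. Put $\Phi_s=e^{ah}I_N+\frac{c}{a}(e^{ah}-1)W$ and $\Psi_s=\frac{b}{a}(e^{ah}-1)\Delta$, and assume $0$ is not an eigenvalue of $\Phi_s$. Then the discrete-time system $X(k+1)=\Phi_sX(k)+\Psi_sU(k)$ is controllable if and only if the continuous-time system $\dot X(t)=(aI_N+cW)X(t)+b\Delta U(t)$ is controllable.
   Context: The continuous-time system is controllable in the usual sense (equivalently $\mathrm{rank}[sI_N-(aI_N+cW),\ b\Delta]=N$ for all $s\in\mathbb{C}$). The discrete-time system is called controllable if every initial state can be steered to the origin in finitely many steps. *)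

(* Defs.v *)
From mathcomp Require Import all_boot all_algebra.
From mathcomp Require Import complex.
From mathcomp Require Import reals sequences exp.
Set Implicit Arguments. Unset Strict Implicit. Unset Printing Implicit Defensive.
Import GRing.Theory Num.Theory.
Local Open Scope ring_scope.

Fixpoint dtraj (R : pzRingType) (N : nat) (A B : 'M[R]_N) (x0 : 'cV[R]_N)
    (u : nat -> 'cV[R]_N) (k : nat) : 'cV[R]_N :=
  match k with
  | 0 => x0
  | k'.+1 => A *m dtraj A B x0 u k' + B *m u k'
  end.

Definition dt_controllable (R : pzRingType) (N : nat) (A B : 'M[R]_N) : Prop :=
  forall x0 : 'cV[R]_N, exists (k : nat) (u : nat -> 'cV[R]_N),
    dtraj A B x0 u k = 0.

Definition cmx (R : rcfType) (m n : nat) (M : 'M[R]_(m, n)) : 'M[R[i]]_(m, n) :=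
  map_mx (fun x => Complex x 0) M.

(* Continuous-time controllability of dX/dt = A X + B U, in the form given in
   the paper's context: rank [sI_N - A, B] = N for all complex s. *)
Definition ct_controllable (R : rcfType) (N : nat) (A B : 'M[R]_N) : Prop :=
  forall s : R[i], \rank (row_mx (s%:M - cmx A) (cmx B)) = N.

Definition Delta_mx (R : pzRingType) (N : nat) (delta : 'I_N -> bool) : 'M[R]_N :=
  diag_mx (\row_i (delta i)%:R).

Definition Phi_s (R : realType) (N : nat) (a c h : R) (W : 'M[R]_N) : 'M[R]_N :=
  (expR (a * h))%:M + (c / a * (expR (a * h) - 1)) *: W.

Definition Psi_s (R : realType) (N : nat) (a b h : R) (delta : 'I_N -> bool)
  : 'M[R]_N :=
  (b / a * (expR (a * h) - 1)) *: Delta_mx R delta.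

(* Main.v *)
Require Import Defs.
From mathcomp Require Import all_boot all_algebra.
From mathcomp Require Import complex.
From mathcomp Require Import reals sequences exp.
From mathcomp Require Import zify.
Set Implicit Arguments. Unset Strict Implicit. Unset Printing Implicit Defensive.
Import GRing.Theory Num.Theory.
Local Open Scope ring_scope.



Definition annP (F : fieldType) n m (A B : 'M[F]_n) (v : 'M[F]_(m, n)) :=
  forall k, v *m A ^+ k *m B = 0.
Definition ctrb (F : fieldType) n (A B : 'M[F]_n) :=
  forall v : 'rV[F]_n, annP A B v -> v = 0.

Lemma ann_fin (F : fieldType) n m (A B : 'M[F]_n.+1) (v : 'M[F]_(m, n.+1)) :
  (forall k, (k < n.+1)%N -> v *m A ^+ k *m B = 0) -> annP A B v.
Proof.
move=> H.
have CH := Cayley_Hamilton A.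
have hp : horner_mx A (char_poly A) = \sum_(i < n.+2) (char_poly A)`_i *: A ^+ i.
  rewrite -{1}(coefK (char_poly A)) poly_def size_char_poly rmorph_sum /=.
  by apply: eq_bigr => i _; rewrite linearZ /= rmorphXn /= horner_mx_X.
have lc : (char_poly A)`_n.+1 = 1.
  by have := char_poly_monic A; rewrite monicE lead_coefE size_char_poly => /eqP.
rewrite hp big_ord_recr /= lc scale1r in CH.
have eN : A ^+ n.+1 = - \sum_(i < n.+1) (char_poly A)`_i *: A ^+ i.
  by apply/eqP; rewrite -addr_eq0 addrC CH.
elim/ltn_ind => k IH.
case: (ltnP k n.+1) => [/H //|le].
have -> : k = ((k - n.+1) + n.+1)%N by rewrite subnK.
rewrite exprD eN mulrN mulr_sumr -mulmxE mulmxN mulNmx.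
rewrite mulmx_sumr mulmx_suml big1 ?oppr0 // => i _.
rewrite -!scalemxAr -scalemxAl.
have -> : A ^+ (k - n.+1) *m A ^+ i = A ^+ (k - n.+1 + i) by rewrite exprD.
rewrite IH ?scaler0 //; have := ltn_ord i; lia.
Qed.




Lemma rank_full (F : fieldType) n p (M : 'M[F]_(n, p)) :
  \rank M = n <-> (forall v : 'rV_n, v *m M = 0 -> v = 0).
Proof.
split=> [rM v vM | H].
  have fM : row_free M by rewrite /row_free rM.
  by apply: (row_free_inj fM); rewrite vM mul0mx.
apply/eqP; rewrite -[_ == _]/(row_free M) -kermx_eq0.
apply/negPn/negP => /rowV0Pn [v /sub_kermxP vM nz].
by rewrite (H v vM) eqxx in nz.
Qed.

Lemma ann_mulA (F : fieldType) n m (A B : 'M[F]_n) (v : 'M[F]_(m, n)) :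
  annP A B v -> annP A B (v *m A).
Proof.
move=> H k; have e : A ^+ k.+1 = A *m A ^+ k := exprS A k.
by have := H k.+1; rewrite e !mulmxA.
Qed.

Lemma eig_pow (F : fieldType) n (A : 'M[F]_n) (v : 'rV_n) s k :
  v *m A = s *: v -> v *m A ^+ k = s ^+ k *: v.
Proof.
move=> H; elim: k => [|k IH]; first by rewrite !expr0 mulmx1 scale1r.
have e : A ^+ k.+1 = A ^+ k *m A := exprSr A k.
by rewrite e mulmxA IH -scalemxAl H scalerA -exprSr.
Qed.

Lemma hautus (F : closedFieldType) n (A B : 'M[F]_n.+1) :
  ctrb A B <-> (forall s, \rank (row_mx (s%:M - A) B) = n.+1).
Proof.
split=> [C s | H v vA].
  apply/rank_full => v; rewrite mul_mx_row => /eqP; rewrite row_mx_eq0.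
  case/andP => /eqP h1 /eqP h2; apply: C => k.
  have e : v *m A = s *: v.
    by apply/eqP; move: h1; rewrite mulmxBr mul_mx_scalar => /eqP; rewrite subr_eq0 eq_sym.
  by rewrite (eig_pow k e) -scalemxAl h2 scaler0.
apply/eqP/negPn/negP => nz.
pose V := (\bigcap_(k < n.+1) kermx (A ^+ k *m B))%MS.
have annV : forall m (w : 'M_(m, n.+1)), (w <= V)%MS -> annP A B w.
  move=> m w /sub_bigcapmxP wV; apply: ann_fin => k kn.
  by rewrite -mulmxA; apply/sub_kermxP; apply: (wV (Ordinal kn)).
have inV : forall m (w : 'M_(m, n.+1)), annP A B w -> (w <= V)%MS.
  move=> m w aw; apply/sub_bigcapmxP => k _; apply/sub_kermxP.
  by rewrite mulmxA aw.
have stab : (V *m A <= V)%MS by apply/inV/ann_mulA/annV.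
have vV : (v <= V)%MS by apply: inV.
have rV : \rank V != 0%N.
  by rewrite mxrank_eq0; apply: contraNneq nz => V0; rewrite -submx0 -V0.
have [a ra] : exists a, root (char_poly (restrict V A)) a.
  by apply/closed_rootP; rewrite size_char_poly.
move: ra; rewrite -eigenvalue_root_char => /eigenvalueP [x /eigenspaceP xe xnz].
move: xe; rewrite eigenspace_restrict // => /eigenspaceP we.
pose w := x *m row_base V.
have wnz : w != 0 by rewrite /w mulmx_free_eq0 ?row_base_free.
have wV : (w <= V)%MS by rewrite /w (submx_trans (submxMl _ _)) ?eq_row_base.
have wB : w *m B = 0 by have := annV _ _ wV 0%N; rewrite expr0 mulmx1.
have := H a; move/rank_full => /(_ w); rewrite mul_mx_row wB mulmxBr mul_mx_scalar.
by rewrite we subrr row_mx0 => /(_ erefl) => w0; rewrite w0 eqxx in wnz.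
Qed.

Lemma ann_add (F : fieldType) n m (A B : 'M[F]_n) (v w : 'M[F]_(m, n)) :
  annP A B v -> annP A B w -> annP A B (v + w).
Proof. by move=> hv hw k; rewrite !mulmxDl hv hw addr0. Qed.

Lemma ann_scale (F : fieldType) n m (A B : 'M[F]_n) (v : 'M[F]_(m, n)) c :
  annP A B v -> annP A B (c *: v).
Proof. by move=> hv k; rewrite -!scalemxAl hv scaler0. Qed.

Lemma ann_transfer (F : fieldType) n (W D : 'M[F]_n) p q p' q' s s' :
  (q == 0) = (q' == 0) -> (s == 0) = (s' == 0) ->
  forall m (v : 'M_(m, n)),
  annP (p%:M + q *: W) (s *: D) v -> annP (p'%:M + q' *: W) (s' *: D) v.
Proof.
move=> hq hs m v.
set A := p%:M + q *: W; set A' := p'%:M + q' *: W.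
have step1 : forall m (w : 'M_(m, n)), annP A (s *: D) w -> s != 0 -> annP A D w.
  move=> m0 w hw sn k; apply/eqP; have := hw k.
  by rewrite -scalemxAr => /eqP; rewrite scaler_eq0 (negPf sn).
have cl : forall m (w : 'M_(m, n)), annP A D w -> annP A D (w *m A').
  move=> m0 w hw; have [q0|qn] := eqVneq q 0.
    have q'0 : q' = 0 by apply/eqP; rewrite -hq q0.
    by rewrite /A' q'0 scale0r addr0 mul_mx_scalar; apply: ann_scale.
  have -> : w *m A' = p' *: w + q' *: (q^-1 *: (w *m A - p *: w)).
    rewrite /A /A' mulmxDr mul_mx_scalar -scalemxAr; congr (_ + _); congr (_ *: _).
    by rewrite mulmxDr mul_mx_scalar addrC addKr -scalemxAr scalerA mulVf ?scale1r.
  apply: ann_add; first exact: ann_scale.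
  apply/ann_scale/ann_scale/ann_add; first exact: ann_mulA.
  by rewrite -scaleNr; apply: ann_scale.
move=> hv; have [s'0|s'n] := eqVneq s' 0.
  by move=> k; rewrite s'0 scale0r mulmx0.
have sn : s != 0 by rewrite hs.
have hD := step1 _ _ hv sn.
have pw : forall j, annP A D (v *m A' ^+ j).
  elim=> [|j IH]; first by rewrite expr0 mulmx1.
  have e : A' ^+ j.+1 = A' ^+ j *m A' := exprSr A' j.
  by rewrite e mulmxA; apply: cl.
move=> k; rewrite -scalemxAr; have := pw k 0%N.
by rewrite expr0 mulmx1 => ->; rewrite scaler0.
Qed.

Local Open Scope complex_scope.

Lemma cmxE (R : rcfType) m n (M : 'M[R]_(m, n)) : cmx M = map_mx (real_complex R) M.
Proof. by []. Qed.

Lemma cmxX (R : rcfType) n (A : 'M[R]_n) k : cmx (A ^+ k) = cmx A ^+ k.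
Proof.
elim: k => [|k IH].
  by rewrite !expr0; apply/matrixP => i j; rewrite !mxE; case: (i == j).
have e1 : A ^+ k.+1 = A *m A ^+ k := exprS A k.
have e2 : cmx A ^+ k.+1 = cmx A *m cmx A ^+ k := exprS (cmx A) k.
by rewrite e1 e2 !cmxE map_mxM -!cmxE IH.
Qed.

Lemma cmx_split (R : rcfType) m n (v : 'M[R[i]]_(m, n)) :
  v = cmx (map_mx (@complex.Re R) v) + 'i *: cmx (map_mx (@complex.Im R) v).
Proof.
apply/matrixP => i j; rewrite !mxE; case: (v i j) => x y /=.
by rewrite [LHS]complexE.
Qed.

Lemma cmx_split0 (R : rcfType) m n (Y Z : 'M[R]_(m, n)) :
  cmx Y + 'i *: cmx Z = 0 -> Y = 0 /\ Z = 0.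
Proof.
move=> H.
have h : forall i j, Y i j = 0 /\ Z i j = 0.
  move=> i j; have := congr1 (fun M : 'M_(m, n) => M i j) H.
  rewrite !mxE /=.
  simpc; move/eqP; rewrite eq_complex /=.
  by case/andP => /eqP -> /eqP ->.
by split; apply/matrixP => i j; rewrite mxE; case: (h i j).
Qed.



Lemma ctrb_cmx (R : rcfType) n (A B : 'M[R]_n) :
  ctrb A B <-> ctrb (cmx A) (cmx B).
Proof.
split=> [C v hv | C v hv].
  set vr := map_mx (@complex.Re R) v; set vi := map_mx (@complex.Im R) v.
  have h : forall k, vr *m (A ^+ k *m B) = 0 /\ vi *m (A ^+ k *m B) = 0.
    move=> k; apply: cmx_split0; have := hv k.
    rewrite -mulmxA -cmxX !cmxE -map_mxM -!cmxE.
    rewrite {1}(cmx_split v) -/vr -/vi mulmxDl -scalemxAl.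
    by rewrite !cmxE -!map_mxM.
  have r0 : vr = 0 by apply: C => k; rewrite -mulmxA; case: (h k).
  have i0 : vi = 0 by apply: C => k; rewrite -mulmxA; case: (h k).
  by rewrite (cmx_split v) -/vr -/vi r0 i0 !cmxE !map_mx0 scaler0 addr0.
apply/eqP; rewrite -(map_mx_eq0 (real_complex R)) -cmxE; apply/eqP/C => k.
by rewrite -cmxX !cmxE -!map_mxM hv map_mx0.
Qed.

Close Scope complex_scope.
Local Open Scope ring_scope.

Lemma dtraj_formula (F : fieldType) n (A B : 'M[F]_n) x0 u k :
  dtraj A B x0 u k = A ^+ k *m x0 + \sum_(i < k) A ^+ i *m B *m u (k - i.+1)%N.
Proof.
have e : forall a, A ^+ a.+1 = A *m A ^+ a := fun a => exprS A a.
elim: k => [|k IH]; first by rewrite big_ord0 expr0 mul1mx addr0.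
rewrite /= IH big_ord_recl /= expr0 mul1mx subSS subn0 mulmxDr -addrA e mulmxA.
congr (_ + _); rewrite addrC mulmx_sumr; congr (_ + _); apply: eq_bigr => i _.
by rewrite /bump /= add1n e subSS !mulmxA.
Qed.

Lemma dt_ctrb (F : fieldType) n (A B : 'M[F]_n.+1) :
  A \in unitmx -> (dt_controllable A B <-> ctrb A B).
Proof.
move=> hA; have e : forall a b, A ^+ a *m A ^+ b = A ^+ (a + b) :=
  fun a b => esym (exprD A a b).
split=> [D v hv | C x0].
  have key : forall x0 : 'cV_n.+1, exists K, forall m, (K <= m)%N -> v *m A ^+ m *m x0 = 0.
    move=> x0; have [k [u hk]] := D x0; exists k => m km.
    have := congr1 (mulmx (v *m A ^+ (m - k))) hk.
    rewrite mulmx0 dtraj_formula mulmxDr mulmx_sumr big1 ?addr0.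
      by rewrite mulmxA -[v *m _ *m _]mulmxA e subnK.
    move=> i _; rewrite !mulmxA -[v *m _ *m A ^+ i]mulmxA e.
    by rewrite hv mul0mx.
  have [K HK] : exists K, forall j : 'I_n.+1, v *m A ^+ K *m delta_mx j (0 : 'I_1) = 0.
    have : forall s : seq 'I_n.+1, exists K, forall j, j \in s ->
        forall m, (K <= m)%N -> v *m A ^+ m *m delta_mx j (0 : 'I_1) = 0.
      elim=> [|j s [K HK]]; first by exists 0%N.
      have [Kj Hj] := key (delta_mx j (0 : 'I_1)); exists (maxn K Kj) => j'.
      rewrite inE => /orP [/eqP -> | js] m le.
        by apply: Hj; apply: leq_trans le; apply: leq_maxr.
      by apply: HK => //; apply: leq_trans le; apply: leq_maxl.
    case/(_ (enum 'I_n.+1)) => K HK; exists K => j.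
    by apply: HK => //; rewrite mem_enum.
  have vK : v *m A ^+ K = 0.
    apply/matrixP => i j; have := congr1 (fun M : 'M_(1, 1) => M i 0) (HK j).
    by rewrite -colE !mxE.
  have uK : A ^+ K \in unitmx by apply: unitrX.
  by rewrite -[v](mulmxK uK) vK mul0mx.
pose S := (\sum_(i < n.+1) (A ^+ i *m B)^T)%MS.
have fS : row_full S.
  rewrite /row_full -mxrank_tr; apply/eqP/rank_full => v vS; apply: C.
  apply: ann_fin => k kn.
  have : ((A ^+ k *m B)^T <= S)%MS by apply: (sumsmx_sup (Ordinal kn)).
  case/submxP => D hD; apply: trmx_inj.
  rewrite -mulmxA trmx_mul hD trmx0 -mulmxA -[S]trmxK -trmx_mul vS trmx0.
  by rewrite mulmx0.
have : ((- (A ^+ n.+1 *m x0))^T <= S)%MS by apply: submx_full.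
case/sub_sumsmxP => w hw.
exists n.+1, (fun j => (w (inord (n - j)))^T).
rewrite dtraj_formula.
have -> : \sum_(i < n.+1) A ^+ i *m B *m (w (inord (n - (n.+1 - i.+1))))^T
    = (\sum_(i < n.+1) w i *m (A ^+ i *m B)^T)^T.
  rewrite raddf_sum; apply: eq_bigr => i _ /=; rewrite trmx_mul trmxK.
  have -> : inord (n - (n.+1 - i.+1)) = i.
    by apply/val_inj; rewrite /= inordK; have := ltn_ord i; lia.
  by [].
by rewrite -hw trmxK addrN.
Qed.

Unset Implicit Arguments.

Theorem corollary10 (R : realType) (N : nat) (a b c h : R) (W : 'M[R]_N)
    (delta : 'I_N -> bool) :
  (0 < N)%N -> a != 0 -> (forall i, W i i = 0) -> 0 < h ->
  ~~ eigenvalue (Phi_s a c h W) 0 ->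
  (dt_controllable (Phi_s a c h W) (Psi_s a b h delta) <->
   ct_controllable (a%:M + c *: W) (b *: Delta_mx R delta)).
Proof.
move=> N0 a0 _ h0.
case: N N0 W delta => [//|n] _ W delta hev.
have e1 : expR (a * h) - 1 != 0.
  rewrite subr_eq0 -expR0; apply/negP => /eqP /expR_inj /eqP.
  by rewrite mulf_eq0 (negPf a0) (negPf (lt0r_neq0 h0)).
have uPhi : Phi_s a c h W \in unitmx.
  rewrite -row_free_unit -kermx_eq0.
  move: hev; rewrite /eigenvalue /eigenspace negbK.
  have -> : (0 : R)%:M = 0 :> 'M_n.+1 by apply/matrixP=> i j; rewrite !mxE mul0rn.
  by rewrite subr0.
rewrite dt_ctrb // /ct_controllable -hautus -ctrb_cmx /Phi_s /Psi_s.
have hq : (c / a * (expR (a * h) - 1) == 0) = (c == 0).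
  by rewrite !mulf_eq0 invr_eq0 (negPf a0) (negPf e1) !orbF.
have hs : (b / a * (expR (a * h) - 1) == 0) = (b == 0).
  by rewrite !mulf_eq0 invr_eq0 (negPf a0) (negPf e1) !orbF.
by split=> H v hv; apply: H; apply: ann_transfer hv.
Qed.
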